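(* There exists a haltingly correct CRN protocol $\Pi=(\mathcal{S},\mathcal{R})$ such that $\operatorname{RT}_{\mathrm{halt}}^{\Pi}(n)=O(n)$, but if the minimum in the definition of $\operatorname{RT}_{\mathrm{halt}}^{\Pi}(n)$ is restricted to runtime policies $\varrho$ with $\varrho(\mathbf{c})\supseteq\mathcal{E}(\mathbf{c})$ for every configuration $\mathbf{c}$, then the resulting quantity is $\Omega(n\log n)$.
   Context: $\mathcal{E}(\mathbf{c})$ denotes the set of reactions that escape from the strongly connected component of $\mathbf{c}$ in the configuration digraph $D^{\Pi}$ (which has an $\alpha$-labeled edge $\mathbf{c}\to\alpha(\mathbf{c})$ for each configuration $\mathbf{c}$ and each $\alpha\in\operatorname{app}(\mathbf{c})$); a reaction $\alpha$ escapes from a component $S$ if $\alpha\in\operatorname{app}(\mathbf{c})$ and $\alpha(\mathbf{c})\notin S$ for all $\mathbf{c}\in S$. CRN model: $\Pi=(\mathcal{S},\mathcal{R})$, finite species set, finite reaction set $\mathcal{R}\subset\mathbb{N}^{\mathcal{S}}\times\mathbb{N}^{\mathcal{S}}$; reactions $(\mathbf{r},\mathbf{p})$ with $\|\mathbf{r}\|_1\in\{1,2\}$, $\|\mathbf{r}\|_1\le\|\mathbf{p}\|_1$; every $\mathbf{r}$ with $1\le\|\mathbf{r}\|_1\le2$ has a nonempty set $\mathcal{R}(\mathbf{r})$ of reactions; void reactions ($\mathbf{r}=\mathbf{p}$) alone in their $\mathcal{R}(\mathbf{r})$; $\operatorname{NV}(\mathcal{R})$ non-void; finite density. Configurations $\mathbf{c}\in\mathbb{N}^{\mathcal{S}}$,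 $\|\mathbf{c}\|_1\ge1$; applicability $\mathbf{r}\le\mathbf{c}$, result $\alpha(\mathbf{c})=\mathbf{c}-\mathbf{r}+\mathbf{p}$; $\operatorname{app}(\mathbf{c})$; reachability $\stackrel{*}{\rightharpoonup}$; $\mathrm{halt}(Z)=\{\mathbf{c}\in Z:\mathbf{c}\stackrel{*}{\rightharpoonup}\mathbf{c}'\Rightarrow\mathbf{c}'=\mathbf{c}\}$. Weakly fair executions $\langle\mathbf{c}^t,\alpha^t\rangle$: every reaction applicable at step $t$ is later scheduled or becomes inapplicable. Correctness is w.r.t. an interface $\mathcal{I}=(\mathcal{U},\mu,\mathcal{C})$ giving target sets $Z_{\mathcal{I}}(\mathbf{c}^0)=\{\mathbf{c}:(\mu(\mathbf{c}^0),\mu(\mathbf{c}))\in\mathcal{C}\}$ and valid initial configurations (those with $Z_{\mathcal{I}}(\mathbf{c}^0)\ne\emptyset$); haltingly correct: every weakly fair valid execution reaches $\mathrm{halt}(Z_{\mathcal{I}}(\mathbf{c}^0))$, first such step = halting step. Runtime: stochastic scheduler with volume $\varphi=\Theta(n)$, $n=\|\mathbf{c}^0\|_1$; propensity $\pi_{\mathbf{c}}(\alpha)=\mathbf{c}(A)/|\mathcal{R}(\mathbf{r})|$ ($\mathbf{r}=A$), $\frac1\varphi\binom{\mathbf{c}(A)}2/|\mathcal{R}(\mathbf{r})|$ ($\mathbf{r}=2A$), $\frac1\varphi\mathbf{c}(A)\mathbf{c}(B)/|\mathcal{R}(\mathbf{r})|$ ($\mathbf{r}=A+B$); step time span $1/\pi_{\mathbf{c}}(\mathcal{R})$.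 $\tau(\eta,t,Q)$ = least $s>t$ with $\alpha^{s-1}\in Q$ or every reaction of $Q$ inapplicable at some step in $[t,s]$. Runtime policy $\varrho(\mathbf{c})\subseteq\operatorname{NV}(\mathcal{R})$; skipping policy $\sigma(t)\ge t$; rounds $t(0)=0$, $t_e(i)=\sigma(t(i))$, $\mathbf{e}^i=\mathbf{c}^{t_e(i)}$, $t(i+1)=\tau(\eta,t_e(i),\varrho(\mathbf{e}^i))$; $\operatorname{TC}^{\varrho}(\mathbf{c})$ = expected total time span of the steps before $\tau(\eta_r,0,\varrho(\mathbf{c}))$ of a stochastic execution from $\mathbf{c}$; $\operatorname{RT}_{\mathrm{halt}}^{\varrho,\sigma}(\eta)=\sum_{i<i^*}\operatorname{TC}^{\varrho}(\mathbf{e}^i)$, $i^*=\min\{i:t(i)\ge t^*\}$; $\operatorname{RT}_{\mathrm{halt}}^{\Pi}(n)=\min_\varrho\max_{\eta,\sigma}\operatorname{RT}_{\mathrm{halt}}^{\varrho,\sigma}(\eta)$, max over weakly fair valid executions with initial molecular count $n$ and all skipping policies. *)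

(* Defs.v *)
From HB Require Import structures.
From mathcomp Require Import all_boot all_order all_algebra.
From mathcomp Require Import all_classical all_reals all_analysis.

Set Implicit Arguments.
Unset Strict Implicit.
Unset Printing Implicit Defensive.

Import Order.TTheory GRing.Theory Num.Theory.
Local Open Scope classical_set_scope.
Local Open Scope ring_scope.

Section CRN.
Context {S : finType}.

Definition vec := {ffun S -> nat}.
Definition norm1 (c : vec) : nat := (\sum_(A : S) c A)%N.
Definition is_config (c : vec) : Prop := (1 <= norm1 c)%N.

Definition reaction := (vec * vec)%type.
Definition void_rx : reaction := ([ffun=> 0%N], [ffun=> 0%N]).

Definition applicable (a : reaction) (c : vec) : bool := [forall A, (a.1 A <= c A)%N].
Definition react (a : reaction) (c : vec) : vec := [ffun A => (c A - a.1 A + a.2 A)%N].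

Definition Rof (Rs : seq reaction) (r : vec) : seq reaction := [seq a <- Rs | a.1 == r].
Definition NV (Rs : seq reaction) : seq reaction := [seq a <- Rs | a.1 != a.2].

Definition step (Rs : seq reaction) (c c' : vec) : Prop :=
  exists a, a \in Rs /\ applicable a c /\ c' = react a c.
Inductive reach (Rs : seq reaction) : vec -> vec -> Prop :=
| reach_refl c : reach Rs c c
| reach_step c c' c'' : step Rs c c' -> reach Rs c' c'' -> reach Rs c c''.

Definition finite_density (Rs : seq reaction) : Prop :=
  exists k : nat, forall c0 c, is_config c0 -> reach Rs c0 c ->
    (norm1 c <= k * norm1 c0)%N.

Definition wf_crn (Rs : seq reaction) : Prop :=
  [/\ uniq Rs,
      (forall a, a \in Rs ->
         [/\ (1 <= norm1 a.1)%N, (norm1 a.1 <= 2)%N & (norm1 a.1 <= norm1 a.2)%N]),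
      (forall r : vec, (1 <= norm1 r)%N -> (norm1 r <= 2)%N -> Rof Rs r != [::]),
      (forall r : vec, (r, r) \in Rs -> Rof Rs r = [:: (r, r)])
    & finite_density Rs].

Record interface := Interface {
  iU : Type;
  imu : vec -> iU;
  iC : iU -> iU -> Prop }.

Definition target (I : interface) (c0 : vec) : set vec :=
  [set c | is_config c /\ @iC I (@imu I c0) (@imu I c)].
Definition valid (I : interface) (c0 : vec) : Prop :=
  is_config c0 /\ target I c0 !=set0.
Definition halt (Rs : seq reaction) (Z : set vec) : set vec :=
  [set c | Z c /\ forall c', reach Rs c c' -> c' = c].

Definition execution (Rs : seq reaction) (cs : nat -> vec) (al : nat -> reaction) : Prop :=
  forall t, [/\ al t \in Rs, applicable (al t) (cs t) & cs t.+1 = react (al t) (cs t)].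
Definition weakly_fair (Rs : seq reaction) (cs : nat -> vec) (al : nat -> reaction) : Prop :=
  forall t a, a \in Rs -> applicable a (cs t) ->
    exists s, (t <= s)%N /\ (al s = a \/ ~~ applicable a (cs s)).

Definition haltingly_correct (Rs : seq reaction) (I : interface) : Prop :=
  forall cs al, execution Rs cs al -> weakly_fair Rs cs al -> valid I (cs 0%N) ->
    exists t, halt Rs (target I (cs 0%N)) (cs t).

Definition stop_cond (cs : nat -> vec) (al : nat -> reaction) (t : nat)
    (Q : set reaction) (s : nat) : Prop :=
  Q (al s.-1) \/ (forall b, Q b -> exists u, (t <= u <= s)%N /\ ~~ applicable b (cs u)).
Definition is_tau (cs : nat -> vec) (al : nat -> reaction) (t : nat)
    (Q : set reaction) (s : nat) : Prop :=
  [/\ (t < s)%N, stop_cond cs al t Q s &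
      forall s', (t < s' < s)%N -> ~ stop_cond cs al t Q s'].
(* step k comes before tau(eta, t, Q), i.e. k < tau(eta, t, Q) *)
Definition before_tau (cs : nat -> vec) (al : nat -> reaction) (t : nat)
    (Q : set reaction) (k : nat) : Prop :=
  forall s, (t < s <= k)%N -> ~ stop_cond cs al t Q s.

Definition is_least (P : nat -> Prop) (n : nat) : Prop :=
  P n /\ forall m, (m < n)%N -> ~ P m.

Definition scc (Rs : seq reaction) (c : vec) : set vec :=
  [set c' | reach Rs c c' /\ reach Rs c' c].
Definition escapes (a : reaction) (X : set vec) : Prop :=
  forall c, X c -> applicable a c /\ ~ X (react a c).
Definition escaping (Rs : seq reaction) (c : vec) : set reaction :=
  [set a | a \in Rs /\ escapes a (scc Rs c)].

Definition runtime_policy (Rs : seq reaction) (rho : vec -> set reaction) : Prop :=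
  forall c a, rho c a -> a \in NV Rs.
Definition skipping_policy (sigma : nat -> nat) : Prop := forall t, (t <= sigma t)%N.

Fixpoint words (Rs : seq reaction) (t : nat) : seq (seq reaction) :=
  if t is t'.+1 then [seq a :: w | a <- Rs, w <- words Rs t'] else [:: [::]].
Definition path_conf (c : vec) (w : seq reaction) (k : nat) : vec :=
  foldl (fun c' a => react a c') c (take k w).
Definition path_rx (w : seq reaction) (k : nat) : reaction := nth void_rx w k.

Section Stochastic.
Context {R : realType}.

(* propensity pi_c(alpha) with volume phi:
   c(A)/|R(r)| for r = A, (1/phi) C(c(A),2)/|R(r)| for r = 2A,
   (1/phi) c(A)c(B)/|R(r)| for r = A + B; uniformly
   prod_A C(c(A), r(A)) / phi^(||r||_1 - 1) / |R(r)|. *)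
Definition propensity (Rs : seq reaction) (phi : R) (c : vec) (a : reaction) : R :=
  ((\prod_(A : S) 'C(c A, a.1 A))%N%:R / phi ^+ (norm1 a.1).-1)
    / (size (Rof Rs a.1))%:R.
Definition tot_propensity (Rs : seq reaction) (phi : R) (c : vec) : R :=
  \sum_(a <- Rs) propensity Rs phi c a.

Definition word_prob (Rs : seq reaction) (phi : R) (c : vec) (w : seq reaction) : R :=
  \prod_(k < size w)
     (propensity Rs phi (path_conf c w k) (path_rx w k)
       / tot_propensity Rs phi (path_conf c w k)).

(* TC^rho(c) with Q = rho(c): expected total time span of the steps before
   tau(eta_r, 0, Q) of a stochastic execution eta_r from c, where the time
   span of step t is 1/pi_{c^t}(R).  Written as
   sum_t E[ 1{t < tau} / pi_{c^t}(R) ] (a sum of nonnegative terms). *)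
Definition TC (Rs : seq reaction) (phi : R) (Q : set reaction) (c : vec) : \bar R :=
  ereal_sup (range (fun N : nat =>
    (\sum_(t < N) \sum_(w <- words Rs t)
        word_prob Rs phi c w *
        (if `[< before_tau (path_conf c w) (path_rx w) 0%N Q t >]
         then (tot_propensity Rs phi (path_conf c w t))^-1 else 0))%:E)).

(* values of RT_halt^{rho,sigma}(eta) (there is exactly one for weakly fair
   executions of a haltingly correct protocol) *)
Definition RT_vals (Rs : seq reaction) (I : interface) (phi : R)
    (rho : vec -> set reaction) (sigma : nat -> nat)
    (cs : nat -> vec) (al : nat -> reaction) : set (\bar R) :=
  [set v | exists (tr : nat -> nat) (tstar istar : nat),
     [/\ tr 0%N = 0%N,
         (forall i, is_tau cs al (sigma (tr i)) (rho (cs (sigma (tr i)))) (tr i.+1)),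
         is_least (fun t => halt Rs (target I (cs 0%N)) (cs t)) tstar,
         is_least (fun i => (tstar <= tr i)%N) istar &
         v = (\sum_(i < istar) TC Rs phi (rho (cs (sigma (tr i)))) (cs (sigma (tr i))))%E]].

Definition RT_max (Rs : seq reaction) (I : interface) (phi : R)
    (rho : vec -> set reaction) (n : nat) : \bar R :=
  ereal_sup [set v | exists cs al sigma,
     [/\ execution Rs cs al /\ weakly_fair Rs cs al, valid I (cs 0%N),
         norm1 (cs 0%N) = n, skipping_policy sigma & RT_vals Rs I phi rho sigma cs al v]].

Definition RT_halt_adm (Rs : seq reaction) (I : interface) (phi : nat -> R)
    (adm : (vec -> set reaction) -> Prop) (n : nat) : \bar R :=
  ereal_inf [set RT_max Rs I (phi n) rho n |
             rho in [set rho | runtime_policy Rs rho /\ adm rho]].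

Definition RT_halt (Rs : seq reaction) (I : interface) (phi : nat -> R) (n : nat) : \bar R :=
  RT_halt_adm Rs I phi (fun _ => True) n.

Definition RT_halt_escaping (Rs : seq reaction) (I : interface) (phi : nat -> R)
    (n : nat) : \bar R :=
  RT_halt_adm Rs I phi
    (fun rho => forall c, is_config c -> escaping Rs c `<=` rho c) n.

End Stochastic.
End CRN.

Arguments vec : clear implicits.
Arguments reaction : clear implicits.
Arguments interface : clear implicits.

Section Asymptotics.
Context {R : realType}.
Definition volume_Theta_n (phi : nat -> R) : Prop :=
  exists a b : R, [/\ 0 < a, 0 < b &
    forall n : nat, (0 < n)%N -> a * n%:R <= phi n /\ phi n <= b * n%:R].
Definition is_O_n (f : nat -> \bar R) : Prop :=
  exists (C : R) (N : nat), forall n, (N <= n)%N -> (f n <= (C * n%:R)%:E)%E.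
Definition is_Omega_nlogn (f : nat -> \bar R) : Prop :=
  exists (c : R) (N : nat), 0 < c /\
    forall n, (N <= n)%N -> ((c * n%:R * ln (n%:R))%:E <= f n)%E.
End Asymptotics.

(* Main.v *)
Require Import Defs.
From HB Require Import structures.
From mathcomp Require Import all_boot all_order all_algebra.
From mathcomp Require Import all_classical all_reals all_analysis.
From mathcomp Require Import ring lra zify.
Set Implicit Arguments.
Unset Strict Implicit.
Unset Printing Implicit Defensive.
Import Order.TTheory GRing.Theory Num.Theory.


Section Gen.
Local Open Scope ring_scope.
Variables (S : finType) (R : realType) (Rs : seq (reaction S)) (phi : R).

Implicit Types (c : vec S) (w : seq (reaction S)) (a : reaction S).
Notation prop := (propensity Rs phi).
Notation tot := (tot_propensity Rs phi).

Lemma words_size t w : w \in words Rs t -> size w = t.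
Proof.
elim: t w => [|t IH] w /=; first by rewrite inE => /eqP ->.
by case/allpairsPdep => a [w' [_ Hw' ->]] /=; rewrite (IH _ Hw').
Qed.

Lemma big_words_cons t (F : seq (reaction S) -> R) :
  \sum_(w <- words Rs t.+1) F w = \sum_(a <- Rs) \sum_(w <- words Rs t) F (a :: w).
Proof. by rewrite /= big_allpairs_dep. Qed.

Lemma big_words_rcons t (F : seq (reaction S) -> R) :
  \sum_(w <- words Rs t.+1) F w = \sum_(w <- words Rs t) \sum_(a <- Rs) F (rcons w a).
Proof.
elim: t F => [|t IH] F.
  by rewrite big_words_cons /= big_seq1; apply: eq_bigr => a _; rewrite big_seq1.
rewrite big_words_cons (big_words_cons t).
by apply: eq_bigr => a _; rewrite IH.
Qed.

Lemma path_conf0 c w : path_conf c w 0 = c.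
Proof. by rewrite /path_conf take0. Qed.

Lemma path_conf_cons c a w k : path_conf c (a :: w) k.+1 = path_conf (react a c) w k.
Proof. by []. Qed.

Lemma path_conf_rcons c w a k : (k <= size w)%N -> path_conf c (rcons w a) k = path_conf c w k.
Proof. by move=> Hk; rewrite /path_conf -cats1 takel_cat. Qed.

Lemma path_rx_rcons w a k : (k < size w)%N -> path_rx (rcons w a) k = path_rx w k.
Proof. by move=> Hk; rewrite /path_rx nth_rcons Hk. Qed.

Lemma path_rx_rcons_last w a : path_rx (rcons w a) (size w) = a.
Proof. by rewrite /path_rx nth_rcons ltnn eqxx. Qed.

Lemma word_prob_nil c : word_prob Rs phi c [::] = 1.
Proof. by rewrite /word_prob big_ord0. Qed.

Lemma word_prob_cons c a w :
  word_prob Rs phi c (a :: w) = prop c a / tot c * word_prob Rs phi (react a c) w.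
Proof.
by rewrite /word_prob /= big_ord_recl /= /path_rx /= path_conf0.
Qed.

Lemma word_prob_rcons c w a :
  word_prob Rs phi c (rcons w a) =
  word_prob Rs phi c w * (prop (path_conf c w (size w)) a / tot (path_conf c w (size w))).
Proof.
rewrite /word_prob size_rcons big_ord_recr /=; congr (_ * _).
  apply: eq_bigr => i _ /=.
  by rewrite path_conf_rcons ?path_rx_rcons // ltnW.
by rewrite path_rx_rcons_last path_conf_rcons.
Qed.

Hypothesis phi_gt0 : 0 < phi.

Lemma prop_ge0 c a : 0 <= prop c a.
Proof. by rewrite /propensity !divr_ge0 // exprn_ge0 // ltW. Qed.

Lemma tot_ge0 c : 0 <= tot c.
Proof. by rewrite /tot_propensity sumr_ge0 // => a _; exact: prop_ge0. Qed.

Lemma word_prob_ge0 c w : 0 <= word_prob Rs phi c w.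
Proof.
by rewrite /word_prob prodr_ge0 // => i _; rewrite divr_ge0 ?prop_ge0 ?tot_ge0.
Qed.

Lemma prop_inapp c a : ~~ applicable a c -> prop c a = 0.
Proof.
move=> /forallPn [X HX]; rewrite /propensity (bigD1 X) //= bin_small ?mul0n ?mul0r //.
by rewrite ltnNge.
Qed.

Lemma react_void c a : applicable a c -> a.1 = a.2 -> react a c = c.
Proof.
move=> /forallP Ha E; apply/ffunP => X; rewrite ffunE -E subnK //.
Qed.

Lemma sum_prop_div c : \sum_(a <- Rs) prop c a / tot c = (tot c != 0)%:R.
Proof.
rewrite -mulr_suml -/(tot c); case: (eqVneq (tot c) 0) => [->|H].
  by rewrite invr0 mulr0.
by rewrite mulfV.
Qed.


Section Upper.
Variables (x : reaction S) (pi : R).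
Hypotheses (xRs : x \in Rs) (uRs : uniq Rs) (pi_gt0 : 0 < pi)
  (Hpi : forall c, applicable x c -> pi <= prop c x).

Definition Gx c w t :=
  all (fun u => path_rx w u != x) (iota 0 t) &&
  all (fun u => applicable x (path_conf c w u)) (iota 0 t.+1).

Lemma bt_G c w t : applicable x c ->
  before_tau (path_conf c w) (path_rx w) 0 [set x] t -> Gx c w t.
Proof.
move=> Hc Hb; apply/andP; split.
- apply/allP => u; rewrite mem_iota add0n => /andP[_ Hu].
  apply/negP => /eqP E; apply: (Hb u.+1); first by rewrite ltn0Sn Hu.
  by left; rewrite /= E.
- apply/allP => u; rewrite mem_iota add0n => /andP[_ Hu].
  case: t Hb Hu => [|t] Hb Hu.
    by move: Hu; rewrite ltnS leqn0 => /eqP ->; rewrite path_conf0.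
  apply/negPn/negP => Hn; apply: (Hb t.+1); first by rewrite ltn0Sn leqnn.
  by right => b /= ->; exists u; split => //; rewrite leq0n -ltnS.
Qed.

Lemma G_rcons c w a t : size w = t -> Gx c (rcons w a) t.+1 -> Gx c w t && (a != x).
Proof.
move=> Hs /andP[/allP H1 /allP H2]; apply/andP; split; last first.
  by have := H1 t; rewrite mem_iota add0n ltnSn -Hs path_rx_rcons_last => ->.
apply/andP; split.
- apply/allP => u; rewrite mem_iota add0n => /andP[_ Hu].
  have := H1 u; rewrite mem_iota add0n ltnS (ltnW Hu) path_rx_rcons ?Hs //; exact.
- apply/allP => u; rewrite mem_iota add0n => /andP[_ Hu].
  have := H2 u; rewrite mem_iota add0n ltnS (ltnW Hu) path_conf_rcons ?Hs //; exact.
Qed.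

Lemma Gx_app c w t : Gx c w t -> applicable x (path_conf c w t).
Proof. by case/andP => _ /allP; apply; rewrite mem_iota add0n ltnSn. Qed.

Definition Sx c t := \sum_(w <- words Rs t) word_prob Rs phi c w * (Gx c w t)%:R.

Lemma sum_neq_x c : \sum_(a <- Rs) (a != x)%:R * (prop c a / tot c) =
   (tot c != 0)%:R - prop c x / tot c.
Proof.
rewrite -(sum_prop_div c) [in RHS](bigD1_seq x) //= addrAC subrr add0r.
by rewrite [RHS]big_mkcond; apply: eq_bigr => a _; case: (a != x); rewrite ?mul1r ?mul0r.
Qed.

Lemma Sx_step c t :
  \sum_(w <- words Rs t) word_prob Rs phi c w * ((Gx c w t)%:R * (tot (path_conf c w t))^-1)
   <= (Sx c t - Sx c t.+1) / pi.
Proof.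
rewrite /Sx big_words_rcons -sumrB mulr_suml; rewrite big_seq [X in _ <= X]big_seq.
apply: ler_sum => w /words_size Hs.
set T := tot (path_conf c w t).
set h := \sum_(a <- Rs) _.
have Hh : h <= word_prob Rs phi c w * (Gx c w t)%:R * ((T != 0)%:R - prop (path_conf c w t) x / T).
  rewrite -sum_neq_x mulr_sumr; apply: ler_sum => a _.
  rewrite word_prob_rcons Hs.
  have Hwp := word_prob_ge0 c w.
  have Hpa := prop_ge0 (path_conf c w t) a; have HT := tot_ge0 (path_conf c w t).
  have H0 : forall b : bool, 0 <= (b%:R : R) by case.
  have Hq : 0 <= prop (path_conf c w t) a / tot (path_conf c w t) by rewrite divr_ge0.
  case HG: (Gx c (rcons w a) t.+1); last first.
    by rewrite mulr0n mulr0; apply: mulr_ge0; apply: mulr_ge0.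
  have /andP[-> ->] := G_rcons Hs HG.
  by rewrite !mulr1n !mulr1 mul1r lexx.
have Hwp := word_prob_ge0 c w.
move: Hh; case HG: (Gx c w t) => Hh; last first.
  rewrite !mulr0n !(mulr0, mul0r) in Hh *; by rewrite divr_ge0 ?subr_ge0 // ltW.
rewrite !mulr1n mulr1 in Hh *.
have HT0 := tot_ge0 (path_conf c w t).
case: (eqVneq T 0) => HT.
  rewrite HT eqxx /= mulr0n invr0 mulr0 subr0 mulr0 in Hh.
  rewrite HT invr0 !mulr0 divr_ge0 ?(ltW pi_gt0) //.
  by rewrite subr_ge0 (le_trans Hh).
rewrite HT mulr1n in Hh.
rewrite ler_pdivlMr //.
have Hx := Hpi (Gx_app HG).
have HT1 : 0 < T by rewrite lt_def HT tot_ge0.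
have : pi / T <= prop (path_conf c w t) x / T by rewrite ler_pM2r ?invr_gt0.
move: Hh; set px := prop _ x; set wp := word_prob _ _ _ _.
move=> Hh Hle; rewrite mul1r.
have H2 : wp * (pi / T) <= wp * (px / T) by apply: ler_wpM2l.
have E : wp / T * pi = wp * (pi / T) by ring.
rewrite E; rewrite mulrBr mulr1 in Hh; lra.
Qed.

Lemma Sx_ge0 c t : 0 <= Sx c t.
Proof. by rewrite /Sx sumr_ge0 // => w _; rewrite mulr_ge0 ?word_prob_ge0 // ler0n. Qed.

Lemma Sx0 c : Sx c 0 <= 1.
Proof.
rewrite /Sx /= big_seq1 word_prob_nil mul1r; by case: (Gx _ _ _); rewrite ?lexx ?ler01.
Qed.

Lemma TC_le_app c : applicable x c -> (TC Rs phi [set x] c <= (pi^-1)%:E)%E.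
Proof.
move=> Hc; apply: ge_ereal_sup => _ [N _ <-]; rewrite lee_fin.
have Hb : forall t, \sum_(w <- words Rs t) word_prob Rs phi c w *
   (if `[< before_tau (path_conf c w) (path_rx w) 0 [set x] t >]
    then (tot (path_conf c w t))^-1 else 0) <=
   \sum_(w <- words Rs t) word_prob Rs phi c w * ((Gx c w t)%:R * (tot (path_conf c w t))^-1).
  move=> t; apply: ler_sum => w _; apply: ler_wpM2l; first exact: word_prob_ge0.
  case: asboolP => H; first by rewrite (bt_G Hc H) mul1r.
  by rewrite mulr_ge0 ?ler0n // invr_ge0 tot_ge0.
have HN : \sum_(t < N) \sum_(w <- words Rs t) word_prob Rs phi c w *
   (if `[< before_tau (path_conf c w) (path_rx w) 0 [set x] t >]
    then (tot (path_conf c w t))^-1 else 0) <= (Sx c 0 - Sx c N) / pi.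
  elim: N => [|N IH]; first by rewrite big_ord0 subrr mul0r.
  rewrite big_ord_recr /=; apply: le_trans (lerD IH (le_trans (Hb N) (Sx_step c N))) _.
  by rewrite -mulrDl addrA subrK.
apply: le_trans HN _; rewrite -[X in _ <= X]mul1r; apply: ler_wpM2r; first by rewrite invr_ge0 ltW.
have := Sx0 c; have := Sx_ge0 c N; lra.
Qed.

Lemma TC_le_inapp c : ~~ applicable x c -> (TC Rs phi [set x] c <= ((tot c)^-1)%:E)%E.
Proof.
move=> Hc; apply: ge_ereal_sup => _ [N _ <-]; rewrite lee_fin.
case: N => [|N]; first by rewrite big_ord0 invr_ge0 tot_ge0.
rewrite big_ord_recl /= big_seq1 word_prob_nil mul1r path_conf0.
rewrite big1 ?addr0; last first.
  move=> i _; rewrite big1 // => w _.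
  case: asboolP => H; last by rewrite mulr0.
  exfalso; apply: (H 1%N) => //; right => b /= ->; exists 0%N; split => //.
  by rewrite path_conf0.
by case: asboolP => H; rewrite ?lexx ?invr_ge0 ?tot_ge0.
Qed.

End Upper.

Section Lower.
Variables (Q : set (reaction S)) (x : reaction S) (c : vec S).
Hypotheses (HQnv : forall b, Q b -> b.1 != b.2) (xQ : Q x) (Hxc : applicable x c).

Definition av w := all (fun a : reaction S => (a.1 == a.2) && applicable a c) w.

Lemma av_conf w k : av w -> path_conf c w k = c.
Proof.
elim: w k => [|a w IH] k /=; first by [].
case/andP => /andP[/eqP Hv Ha] Hw; case: k => [|k]; first by rewrite path_conf0.
by rewrite path_conf_cons react_void // IH.
Qed.

Lemma av_bt w t : av w -> size w = t -> before_tau (path_conf c w) (path_rx w) 0 Q t.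
Proof.
move=> Hav Hs s /andP[Hs0 Hst] [Hq | Hall].
- have Hin : path_rx w s.-1 \in w by rewrite /path_rx mem_nth // Hs prednK //; exact: ltn0Sn.
  have := HQnv Hq; move/allP: Hav => /(_ _ Hin) /andP[-> _] //.
- have [u [_ Hu]] := Hall x xQ; by rewrite av_conf // Hxc in Hu.
Qed.

Definition Vv := \sum_(a <- Rs | a.1 == a.2) prop c a.

Lemma A_sum t : \sum_(w <- words Rs t) word_prob Rs phi c w * (av w)%:R = (Vv / tot c) ^+ t.
Proof.
elim: t => [|t IH]; first by rewrite /= big_seq1 word_prob_nil mul1r expr0.
rewrite big_words_cons exprS.
transitivity (\sum_(a <- Rs) (a.1 == a.2)%:R * (prop c a / tot c) * (Vv / tot c) ^+ t).
  apply: eq_bigr => a _; case E: ((a.1 == a.2) && applicable a c).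
    case/andP: E => /eqP Hv Ha; rewrite -IH mulr_sumr; apply: eq_big => // w _.
    rewrite word_prob_cons react_void // /= Ha Hv eqxx /= mul1r.
    by rewrite mulrA.
  rewrite big1; last by move=> w _; rewrite /= E /= mulr0.
  case: (eqVneq a.1 a.2) => Hv; last by rewrite /= !mul0r.
  by rewrite Hv eqxx /= in E; rewrite prop_inapp ?E // mul0r mulr0 mul0r.
rewrite -mulr_suml; congr (_ * _).
rewrite /Vv mulr_suml [RHS]big_mkcond /=; apply: eq_bigr => a _.
by case: (a.1 == a.2); rewrite ?mul1r ?mul0r.
Qed.

Lemma TC_ge_partial N :
  ((\sum_(t < N) (Vv / tot c) ^+ t / tot c)%:E <= TC Rs phi Q c)%E.
Proof.
apply: le_trans; last by apply: ereal_sup_ubound; exists N.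
rewrite lee_fin; apply: ler_sum => t _.
rewrite -A_sum mulr_suml big_seq [X in _ <= X]big_seq; apply: ler_sum => w /words_size Hs.
case Hw: (av w); last first.
  rewrite mulr0 mul0r mulr_ge0 ?word_prob_ge0 //.
  by case: asboolP; rewrite ?lexx ?invr_ge0 ?tot_ge0.
case: asboolP => H; last by exfalso; apply: H; exact: av_bt.
by rewrite mulr1 av_conf.
Qed.

Definition Pn := \sum_(a <- Rs | a.1 != a.2) prop c a.

Lemma tot_VP : tot c = Vv + Pn.
Proof. by rewrite /tot_propensity (bigID (fun a : reaction S => a.1 == a.2)). Qed.

Lemma geom_id (v : R) N : (\sum_(t < N) v ^+ t) * (1 - v) = 1 - v ^+ N.
Proof.
elim: N => [|N IH]; first by rewrite big_ord0 mul0r expr0 subrr.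
rewrite big_ord_recr /= mulrDl IH exprS; ring.
Qed.

Lemma pow_half (v : R) : 0 <= v -> v < 1 -> exists N, v ^+ N <= 2^-1.
Proof.
move=> v0 v1; set d := 1 - v.
have d0 : 0 < d by rewrite /d subr_gt0.
exists (Num.Def.archi_bound (d^-1)).
have Hd' : 0 <= d^-1 by rewrite invr_ge0 ltW.
have HN := archi_boundP Hd'.
set N := Num.Def.archi_bound _ in HN *.
have Hb : forall n, 1 + n%:R * d <= (1 + d) ^+ n.
  elim=> [|n IH]; first by rewrite mul0r addr0 expr0.
  rewrite exprS -natr1; have Hp : 0 <= (1 + d) ^+ n by rewrite exprn_ge0 // ltW // addr_gt0.
  have Hd : 0 <= n%:R * d by rewrite mulr_ge0 // ltW.
  nra.
have H1 : v ^+ N * (1 + d) ^+ N <= 1.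
  rewrite -exprMn exprn_ile1 //; first by rewrite mulr_ge0 // ltW // addr_gt0.
  rewrite /d; nra.
have H2 : 1 < N%:R * d by rewrite -(ltr_pdivrMr _ _ d0) mul1r.
have Hv : 0 <= v ^+ N by rewrite exprn_ge0.
have H3 := Hb N.
have : v ^+ N * (1 + N%:R * d) <= 1 by apply: le_trans H1; rewrite ler_wpM2l.
move=> H4; rewrite -(ler_pM2r (_ : (0:R) < 2)) // mulVf //; nra.
Qed.

Lemma TC_ge_half : 0 < Pn -> (((2 * Pn)^-1)%:E <= TC Rs phi Q c)%E.
Proof.
move=> HP.
have HV : 0 <= Vv by rewrite sumr_ge0 // => a _; exact: prop_ge0.
have HT : 0 < tot c by rewrite tot_VP; lra.
set v := Vv / tot c.
have v0 : 0 <= v by rewrite divr_ge0 // ltW.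
have v1 : v < 1 by rewrite /v ltr_pdivrMr // mul1r tot_VP; lra.
have [N HN] := pow_half v0 v1.
apply: le_trans (TC_ge_partial N); rewrite lee_fin -mulr_suml.
have E : 1 - v = Pn / tot c by rewrite /v -[1](divff (lt0r_neq0 HT)) -mulrBl tot_VP; congr (_ * _); ring.
have G := geom_id v N; rewrite E in G.
set s := \sum_(t < N) v ^+ t in G *.
have Hs : 1 / 2 <= s * (Pn / tot c) by rewrite G; lra.
have HP0 : Pn != 0 by rewrite lt0r_neq0.
have HT0 : tot c != 0 by rewrite lt0r_neq0.
rewrite (_ : s / tot c = (s * (Pn / tot c)) / Pn); last by field; rewrite HP0 HT0.
rewrite ler_pdivlMr // (_ : (2 * Pn)^-1 * Pn = 1/2); [exact: Hs | by field].
Qed.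

End Lower.

End Gen.


Section Concrete.

Definition Sp := 'I_4.
Definition sL : Sp := @Ordinal 4 0 isT.
Definition sA : Sp := @Ordinal 4 1 isT.
Definition sB : Sp := @Ordinal 4 2 isT.
Definition sZ : Sp := @Ordinal 4 3 isT.
Definition dv (X : Sp) : vec Sp := [ffun Y => nat_of_bool (Y == X)].
Definition vadd (u v : vec Sp) : vec Sp := [ffun Y => u Y + v Y].
Definition rp := vadd (dv sL) (dv sA).
Definition pp := vadd (dv sL) (dv sB).
Definition rq := vadd (dv sL) (dv sZ).
Definition pq := vadd (dv sB) (dv sB).
Definition rxp : reaction Sp := (rp, pp).
Definition rxq : reaction Sp := (rq, pq).
Definition fvec (f : {ffun Sp -> 'I_3}) : vec Sp := [ffun X => nat_of_ord (f X)].
Definition rlist : seq (vec Sp) :=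
  [seq fvec f | f <- [seq f <- enum {ffun Sp -> 'I_3} | (1 <= norm1 (fvec f) <= 2)%N]].
Definition img (r : vec Sp) := if r == rp then pp else if r == rq then pq else r.
Definition Rs : seq (reaction Sp) := [seq (r, img r) | r <- rlist].
Definition cfg (l a b z : nat) : vec Sp := [ffun X : Sp => nth 0%N [:: l; a; b; z] X].

Lemma norm1_cfg l a b z : norm1 (cfg l a b z) = (l + a + b + z)%N.
Proof. by rewrite /norm1 !big_ord_recl big_ord0 !ffunE /= addn0 !addnA. Qed.

Lemma norm1_dv X : norm1 (dv X) = 1%N.
Proof.
rewrite /norm1 (bigD1 X) //= ffunE eqxx big1 // => Y /negbTE HY.
by rewrite ffunE HY.
Qed.

Lemma norm1_vadd u v : norm1 (vadd u v) = (norm1 u + norm1 v)%N.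
Proof. by rewrite /norm1 -big_split; apply: eq_bigr => X _; rewrite ffunE. Qed.

Lemma le_norm1 (r : vec Sp) X : (r X <= norm1 r)%N.
Proof. by rewrite /norm1 (bigD1 X) //= leq_addr. Qed.

Lemma fvec_inj : injective fvec.
Proof.
move=> f g /ffunP E; apply/ffunP => X; apply: val_inj; have := E X; by rewrite !ffunE.
Qed.

Lemma mem_rlist r : (r \in rlist) = (1 <= norm1 r <= 2)%N.
Proof.
apply/idP/idP.
  by case/mapP => f; rewrite mem_filter => /andP[H _] ->.
move=> H; apply/mapP; exists [ffun X => inord (r X) : 'I_3].
  rewrite mem_filter mem_enum andbT.
  suff -> : fvec [ffun X => inord (r X) : 'I_3] = r by [].
  apply/ffunP => X; rewrite !ffunE inordK //.
  case/andP: H => _ H; rewrite ltnS; exact: leq_trans (le_norm1 r X) H.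
apply/ffunP => X; rewrite !ffunE inordK //.
case/andP: H => _ H; rewrite ltnS; exact: leq_trans (le_norm1 r X) H.
Qed.

Lemma uniq_rlist : uniq rlist.
Proof. rewrite map_inj_uniq; [by rewrite filter_uniq // enum_uniq | exact: fvec_inj]. Qed.

Lemma mem_Rs a : (a \in Rs) = (a.1 \in rlist) && (a.2 == img a.1).
Proof.
apply/mapP/andP => [[r Hr ->] | [H1 /eqP H2]] //.
by exists a.1 => //; rewrite -H2; case: a {H1 H2}.
Qed.

Lemma uniq_Rs : uniq Rs.
Proof. by rewrite map_inj_uniq ?uniq_rlist // => r s [->]. Qed.

Lemma Rof_Rs r : r \in rlist -> Rof Rs r = [:: (r, img r)].
Proof.
move=> Hr; rewrite /Rof /Rs filter_map /=.
rewrite (_ : [seq x <- rlist | preim (fun r0 => (r0, img r0)) (fun a => a.1 == r) x] = [seq x <- rlist | pred1 r x]) //.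
by rewrite filter_pred1_uniq // uniq_rlist.
Qed.

Lemma rp_sA : rp sA = 1%N. Proof. by rewrite !ffunE. Qed.
Lemma rq_sA : rq sA = 0%N. Proof. by rewrite !ffunE. Qed.


Lemma dvE X Y : dv X Y = nat_of_bool (Y == X). Proof. by rewrite ffunE. Qed.
Lemma vaddE u v X : vadd u v X = (u X + v X)%N. Proof. by rewrite ffunE. Qed.

Lemma rp_neq_rq : rp != rq.
Proof. by apply/eqP => /ffunP/(_ sA); rewrite !vaddE !dvE. Qed.
Lemma rp_neq_pp : rp != pp.
Proof. by apply/eqP => /ffunP/(_ sA); rewrite !vaddE !dvE. Qed.
Lemma rq_neq_pq : rq != pq.
Proof. by apply/eqP => /ffunP/(_ sL); rewrite !vaddE !dvE. Qed.

Lemma img_rp : img rp = pp. Proof. by rewrite /img eqxx. Qed.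
Lemma img_rq : img rq = pq. Proof. by rewrite /img eq_sym (negbTE rp_neq_rq) eqxx. Qed.

Lemma norm1_rp : norm1 rp = 2%N. Proof. by rewrite norm1_vadd !norm1_dv. Qed.
Lemma norm1_rq : norm1 rq = 2%N. Proof. by rewrite norm1_vadd !norm1_dv. Qed.
Lemma norm1_pp : norm1 pp = 2%N. Proof. by rewrite norm1_vadd !norm1_dv. Qed.
Lemma norm1_pq : norm1 pq = 2%N. Proof. by rewrite norm1_vadd !norm1_dv. Qed.

Lemma rp_in : rp \in rlist. Proof. by rewrite mem_rlist norm1_rp. Qed.
Lemma rq_in : rq \in rlist. Proof. by rewrite mem_rlist norm1_rq. Qed.
Lemma rxp_in : rxp \in Rs. Proof. by rewrite mem_Rs rp_in img_rp eqxx. Qed.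
Lemma rxq_in : rxq \in Rs. Proof. by rewrite mem_Rs rq_in img_rq eqxx. Qed.

Lemma img_other r : r != rp -> r != rq -> img r = r.
Proof. by rewrite /img => /negbTE -> /negbTE ->. Qed.

Lemma Rs_cases a : a \in Rs -> [\/ a = rxp, a = rxq | a.2 = a.1].
Proof.
rewrite mem_Rs => /andP[_ /eqP E]; case: a E => r p /= ->.
case: (eqVneq r rp) => [->|H1]; first by constructor 1; rewrite img_rp.
case: (eqVneq r rq) => [->|H2]; first by constructor 2; rewrite img_rq.
by constructor 3; rewrite img_other.
Qed.

Lemma NV_cases a : a \in Rs -> a.1 != a.2 -> a = rxp \/ a = rxq.
Proof.
case/Rs_cases => [->|->|->]; [by left | by right | by rewrite eqxx].
Qed.

Lemma rxp_nv : rxp.1 != rxp.2. Proof. exact: rp_neq_pp. Qed.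
Lemma rxq_nv : rxq.1 != rxq.2. Proof. exact: rq_neq_pq. Qed.

Lemma NV_perm : perm_eq (NV Rs) [:: rxp; rxq].
Proof.
apply: uniq_perm; first by rewrite filter_uniq // uniq_Rs.
  rewrite /= inE andbT; apply/eqP => -[E _]; by move: rp_neq_rq; rewrite E eqxx.
move=> a; rewrite mem_filter !inE; apply/idP/idP.
  by case/andP => H1 H2; case: (NV_cases H2 H1) => ->; rewrite eqxx ?orbT.
by case/orP => /eqP ->; rewrite ?rxp_nv ?rxq_nv ?rxp_in ?rxq_in.
Qed.

Lemma norm1_Rs a : a \in Rs -> norm1 a.2 = norm1 a.1.
Proof.
by case/Rs_cases => [->|->|->] //=; rewrite ?norm1_rp ?norm1_pp ?norm1_rq ?norm1_pq.
Qed.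

Lemma norm1_Rs1 a : a \in Rs -> (1 <= norm1 a.1 <= 2)%N.
Proof. by rewrite mem_Rs -mem_rlist => /andP[]. Qed.

Lemma sum_sub (c r : vec Sp) : (forall X, r X <= c X)%N ->
  (\sum_X (c X - r X))%N = (norm1 c - norm1 r)%N.
Proof.
move=> H; apply/eqP; rewrite -(eqn_add2r (norm1 r)) subnK; last first.
  by rewrite /norm1 leq_sum.
by rewrite /norm1 -big_split /=; apply/eqP; apply: eq_bigr => X _; rewrite subnK.
Qed.

Lemma norm1_react a c : a \in Rs -> applicable a c -> norm1 (react a c) = norm1 c.
Proof.
move=> Ha /forallP Hap.
rewrite /norm1 /react (eq_bigr (fun X => (c X - a.1 X) + a.2 X)%N); last by move=> X _; rewrite ffunE.
rewrite big_split /= sum_sub // -/(norm1 a.2) norm1_Rs // subnK //.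
by rewrite /norm1 leq_sum.
Qed.

Lemma reach_norm c c' : reach Rs c c' -> norm1 c' = norm1 c.
Proof.
elim=> // x y z [a [Ha [Hap ->]]] _ IH; by rewrite IH norm1_react.
Qed.

Lemma app_pair U V c : U != V ->
  applicable (vadd (dv U) (dv V), vadd (dv U) (dv V)) c = (1 <= c U)%N && (1 <= c V)%N.
Proof.
move=> UV; have VU : V != U by rewrite eq_sym.
apply/forallP/andP => [H | [HU HV] X].
  have := H U; have := H V; rewrite /= !vaddE !dvE !eqxx (negbTE UV) (negbTE VU) /=.
  by rewrite add0n addn0 => ? ?; split.
rewrite /= vaddE !dvE; case: (eqVneq X U) => [->|XU]; first by rewrite (negbTE UV).
by case: (eqVneq X V) => [->|XV] //; rewrite (negbTE XU) (negbTE XV).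
Qed.

Lemma app_rxp c : applicable rxp c = (1 <= c sL)%N && (1 <= c sA)%N.
Proof. by rewrite -(app_pair c (isT : sL != sA)). Qed.
Lemma app_rxq c : applicable rxq c = (1 <= c sL)%N && (1 <= c sZ)%N.
Proof. by rewrite -(app_pair c (isT : sL != sZ)). Qed.

Lemma prod_bin2 (c : vec Sp) U V : U != V ->
  (\prod_X 'C(c X, vadd (dv U) (dv V) X))%N = (c U * c V)%N.
Proof.
move=> UV; rewrite (bigD1 U) //= (bigD1 V) /=; last by rewrite eq_sym.
rewrite big1 ?muln1; last first.
  move=> X /andP[HU HV]; by rewrite vaddE !dvE (negbTE HU) (negbTE HV) bin0.
rewrite !vaddE !dvE eqxx (negbTE UV) eq_sym (negbTE UV) /=.
by rewrite eqxx addn0 add0n !bin1.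
Qed.

Lemma prod_bin1 (c : vec Sp) U : (\prod_X 'C(c X, dv U X))%N = c U.
Proof.
rewrite (bigD1 U) //= big1 ?muln1; last by move=> X HX; rewrite dvE (negbTE HX) bin0.
by rewrite dvE eqxx bin1.
Qed.

Lemma dv_in X : (dv X, dv X) \in Rs.
Proof.
rewrite mem_Rs /= mem_rlist norm1_dv /= img_other //.
  by apply/eqP => E; move: (norm1_dv X); rewrite E norm1_rp.
by apply/eqP => E; move: (norm1_dv X); rewrite E norm1_rq.
Qed.

End Concrete.


Section Dyn.
Implicit Types (c : vec Sp) (a : reaction Sp).

Definition Phi (c : vec Sp) := (c sA + c sZ)%N.

Lemma reactE a (c : vec Sp) X : react a c X = (c X - a.1 X + a.2 X)%N.
Proof. by rewrite ffunE. Qed.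

Lemma react_rxp (c : vec Sp) : (1 <= c sL)%N -> react rxp c sL = c sL /\ react rxp c sA = (c sA - 1)%N /\
   react rxp c sZ = c sZ /\ react rxp c sB = (c sB + 1)%N.
Proof. move=> H; rewrite !reactE /= !vaddE !dvE /=; move: H; move: (c sL) (c sA) (c sZ) (c sB) => l a z b; lia. Qed.

Lemma react_rxq (c : vec Sp) : react rxq c sL = (c sL - 1)%N /\ react rxq c sA = c sA /\
   react rxq c sZ = (c sZ - 1)%N /\ react rxq c sB = (c sB + 2)%N.
Proof. rewrite !reactE /= !vaddE !dvE /=; move: (c sL) (c sA) (c sZ) (c sB) => l a z b; lia. Qed.

Lemma step_cases a c : a \in Rs -> applicable a c ->
  react a c = c \/ (Phi (react a c) < Phi c)%N.
Proof.
case/Rs_cases => [->|->|E] Hap.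
- right; move: Hap; rewrite app_rxp /Phi => /andP[Ha1 Ha2]; have := react_rxp Ha1; lia.
- right; move: Hap; rewrite app_rxq /Phi; have := react_rxq c; lia.
- by left; rewrite react_void.
Qed.

Lemma reach_Phi c c' : reach Rs c c' -> (Phi c' <= Phi c)%N /\ (Phi c' = Phi c -> c' = c).
Proof.
elim=> [x|x y z [a [Ha [Hap ->]]] _ [IH1 IH2]]; first by [].
case: (step_cases Ha Hap) => [E|H]; first by rewrite E in IH1 IH2 *.
split; first by lia.
move=> E; lia.
Qed.

Lemma scc_single c c' : scc Rs c c' -> c' = c.
Proof.
case=> H1 H2; have [A1 A2] := reach_Phi H1; have [B1 B2] := reach_Phi H2.
by apply: A2; apply/eqP; rewrite eqn_leq A1 B1.
Qed.

Lemma react_ne a c : a \in Rs -> applicable a c -> a.1 != a.2 -> react a c != c.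
Proof.
move=> Ha Hap Hnv; case: (step_cases Ha Hap) => [E|H].
  case: (NV_cases Ha Hnv) => Ea; subst a.
    by move: Hap E; rewrite app_rxp => /andP[Ha1 Ha2] /ffunP/(_ sA); have := react_rxp Ha1; lia.
  by move: Hap E; rewrite app_rxq => Hap /ffunP/(_ sL); have := react_rxq c; lia.
by apply/eqP => E; rewrite E ltnn in H.
Qed.

Lemma escaping_in a c : a \in Rs -> applicable a c -> a.1 != a.2 -> escaping Rs c a.
Proof.
move=> Ha Hap Hnv; split => // c' /scc_single ->; split => // /scc_single E.
by move: (react_ne Ha Hap Hnv); rewrite E eqxx.
Qed.

Lemma halt_L0 c c' : c sL = 0%N -> reach Rs c c' -> c' = c.
Proof.
move=> H0 Hr; elim: Hr H0 => // x y z [a [Ha [Hap ->]]] _ IH Hx.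
have Ey : react a x = x.
  case/Rs_cases: Ha Hap => [->|->|E] Hap.
  - by move: Hap; rewrite app_rxp Hx.
  - by move: Hap; rewrite app_rxq Hx.
  - by rewrite react_void.
by rewrite IH Ey.
Qed.

Definition Iface : interface Sp :=
  @Interface Sp (vec Sp) (fun c => c) (fun c0 _ => c0 sL = 1%N /\ c0 sZ = 1%N).

Lemma halt_L0' c0 c : c0 sL = 1%N -> c0 sZ = 1%N -> is_config c -> c sL = 0%N ->
  halt Rs (target Iface c0) c.
Proof. by move=> H1 H2 Hc H0; split; [split | move=> c'; apply: halt_L0]. Qed.

Lemma not_halt c0 c : applicable rxq c -> ~ halt Rs (target Iface c0) c.
Proof.
move=> Hap [_ H]; have := H (react rxq c).
have Hs : reach Rs c (react rxq c).
  by apply: reach_step (reach_refl _ _); exists rxq; split => //; exact: rxq_in.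
move/(_ Hs) => /eqP; apply/negP; apply: react_ne => //; [exact: rxq_in | exact: rxq_nv].
Qed.

Lemma inv_step a c : a \in Rs -> applicable a c -> c sL = c sZ -> (c sL <= 1)%N ->
  react a c sL = react a c sZ /\ (react a c sL <= 1)%N.
Proof.
case/Rs_cases => [->|->|E] Hap H1 H2.
- by move: Hap; rewrite app_rxp => /andP[Ha1 Ha2]; have := react_rxp Ha1; lia.
- by have := react_rxq c; lia.
- by rewrite react_void.
Qed.

Lemma exec_inv cs al : execution Rs cs al -> cs 0%N sL = 1%N -> cs 0%N sZ = 1%N ->
  forall t, [/\ cs t sL = cs t sZ, (cs t sL <= 1)%N & norm1 (cs t) = norm1 (cs 0%N)].
Proof.
move=> He H1 H2; elim=> [|t [IH1 IH2 IH3]]; first by rewrite H1 H2.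
have [Ha Hap ->] := He t.
have [J1 J2] := inv_step Ha Hap IH1 IH2.
by split => //; rewrite norm1_react.
Qed.

Lemma rxq_fires cs al t : execution Rs cs al -> cs 0%N sL = 1%N -> cs 0%N sZ = 1%N ->
  al t = rxq -> cs t.+1 sL = 0%N.
Proof.
move=> He H1 H2 Eq; have [Ha Hap ->] := He t; rewrite Eq in Hap *.
have [I1 I2 _] := exec_inv He H1 H2 t.
move: Hap; rewrite app_rxq; have := react_rxq (cs t); lia.
Qed.

Lemma rxq_inapp cs al t : execution Rs cs al -> cs 0%N sL = 1%N -> cs 0%N sZ = 1%N ->
  ~~ applicable rxq (cs t) -> cs t sL = 0%N.
Proof.
move=> He H1 H2; have [I1 I2 _] := exec_inv He H1 H2 t.
rewrite app_rxq; lia.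
Qed.

Lemma halting_correct : haltingly_correct Rs Iface.
Proof.
move=> cs al He Hf [Hc0 [c [_ [H1 H2]]]].
have Happ : applicable rxq (cs 0%N) by rewrite app_rxq H1 H2.
have [s [_ Hs]] := Hf 0%N rxq rxq_in Happ.
have Hcfg : forall t, is_config (cs t).
  by move=> t; have [_ _ E] := exec_inv He H1 H2 t; rewrite /is_config E.
case: Hs => [Hs|Hs].
  by exists s.+1; apply: halt_L0' => //; exact: (rxq_fires He H1 H2 Hs).
by exists s; apply: halt_L0' => //; exact: (rxq_inapp He H1 H2 Hs).
Qed.

Lemma wf_Rs : wf_crn Rs.
Proof.
split.
- exact: uniq_Rs.
- move=> a Ha; have /andP[B1 B2] := norm1_Rs1 Ha; split => //.
  by rewrite norm1_Rs.
- move=> r H1 H2; rewrite Rof_Rs //; by rewrite mem_rlist H1 H2.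
- move=> r Hr; have Hr' : r \in rlist by move: Hr; rewrite mem_Rs => /andP[].
  rewrite Rof_Rs //; move: Hr; rewrite mem_Rs /= => /andP[_ /eqP <-] //.
- exists 1%N => c0 c _ Hr; by rewrite mul1n (reach_norm Hr).
Qed.

End Dyn.


Section Real.
Local Open Scope ring_scope.
Variable R : realType.
Implicit Types (c : vec Sp) (a : reaction Sp) (phi : R).

Lemma prop_rxq phi c : propensity Rs phi c rxq = (c sL * c sZ)%:R / phi.
Proof. by rewrite /propensity /= prod_bin2 // norm1_rq /= expr1 Rof_Rs ?rq_in //= divr1. Qed.

Lemma prop_rxp phi c : propensity Rs phi c rxp = (c sL * c sA)%:R / phi.
Proof. by rewrite /propensity /= prod_bin2 // norm1_rp /= expr1 Rof_Rs ?rp_in //= divr1. Qed.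

Lemma prop_dv phi c X : propensity Rs phi c (dv X, dv X) = (c X)%:R.
Proof.
rewrite /propensity /= prod_bin1 norm1_dv /= expr0 Rof_Rs ?divr1 //.
by rewrite mem_rlist norm1_dv.
Qed.

Lemma tot_ge_dv phi c X : 0 < phi -> (c X)%:R <= tot_propensity Rs phi c.
Proof.
move=> Hphi; rewrite /tot_propensity (bigD1_seq (dv X, dv X)) ?dv_in ?uniq_Rs //=.
rewrite prop_dv lerDl sumr_ge0 // => a _; exact: prop_ge0.
Qed.

Lemma exists_pos c : is_config c -> exists X, (0 < c X)%N.
Proof.
move=> Hc; case: (pickP (fun X => 0 < c X)%N) => [X HX | H0]; first by exists X.
move: Hc; rewrite /is_config /norm1 big1 // => X _; have := H0 X; rewrite /=; lia.
Qed.

Definition rho_good : vec Sp -> set (reaction Sp) := fun _ => [set rxq]%classic.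

Lemma RT_good_bound phi cs al sigma v : 0 < phi -> execution Rs cs al ->
  valid Iface (cs 0%N) -> RT_vals Rs Iface phi rho_good sigma cs al v ->
  (v <= (phi + 1)%:E)%E.
Proof.
move=> Hphi He [Hc0 [c [_ [H1 H2]]]] [tr [tstar [istar [Htr0 Htau [Ht1 Ht2] [Hi1 Hi2] ->]]]].
have Hcfg : forall t, is_config (cs t).
  by move=> t; have [_ _ E] := exec_inv He H1 H2 t; rewrite /is_config E.
have Happ0 : applicable rxq (cs 0%N) by rewrite app_rxq H1 H2.
have Hhalt : forall t, cs t sL = 0%N -> (tstar <= t)%N.
  move=> t Ht; rewrite leqNgt; apply/negP => Hlt; apply: (Ht2 t Hlt).
  exact: halt_L0'.
have Hts : (0 < tstar)%N.
  case: tstar Ht1 {Ht2 Hhalt Hi1 Hi2} => // Ht1; exfalso; exact: (not_halt Happ0 Ht1).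
have [Hlt Hsc _] := Htau 0%N; rewrite Htr0 in Hlt Hsc.
have Htr1 : (tstar <= tr 1%N)%N.
  case: Hsc => [Hq | Hall].
    have Hp : (0 < tr 1%N)%N by lia.
    apply: Hhalt; rewrite -(prednK Hp); exact: (rxq_fires He H1 H2 Hq).
  have [u [/andP[_ Hu] Hna]] := Hall rxq erefl.
  exact: leq_trans (Hhalt u (rxq_inapp He H1 H2 Hna)) Hu.
have Hist : istar = 1%N.
  case: istar Hi1 Hi2 => [|[|m]] Hi1 Hi2 //.
    by rewrite Htr0 in Hi1; lia.
  by exfalso; apply: (Hi2 1%N).
rewrite Hist big_ord1 Htr0 /rho_good.
set e := cs (sigma 0%N).
case: (boolP (applicable rxq e)) => Hap.
  have Hpi : forall c', applicable rxq c' -> phi^-1 <= propensity Rs phi c' rxq.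
    move=> c'; rewrite app_rxq prop_rxq => /andP[A1 A2].
    rewrite -[X in X <= _]mul1r; apply: ler_wpM2r; [by rewrite invr_ge0 ltW | by rewrite ler1n muln_gt0 A1 A2].
  apply: le_trans (TC_le_app Hphi rxq_in uniq_Rs _ Hpi Hap) _; first by rewrite invr_gt0.
  by rewrite invrK lee_fin lerDl.
apply: le_trans (TC_le_inapp Rs Hphi Hap) _; rewrite lee_fin.
have [X HX] := exists_pos (Hcfg (sigma 0%N)).
have HT : 1 <= tot_propensity Rs phi e.
  by apply: le_trans (tot_ge_dv _ X Hphi); rewrite ler1n.
rewrite (le_trans _ (_ : 1 <= phi + 1)) //; last by lra.
by rewrite invf_le1 // (lt_le_trans ltr01).
Qed.


Lemma harm m : ln ((m.+1)%:R : R) <= \sum_(i < m) ((m - i)%:R)^-1.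
Proof.
elim: m => [|m IH]; first by rewrite big_ord0 ln1.
rewrite big_ord_recl subn0 /=.
rewrite (eq_bigr (fun i : 'I_m => ((m - i)%:R)^-1 : R)); last first.
  by move=> i _; rewrite /bump /= add1n subSS.
have Hm : (0 : R) < m.+1%:R by rewrite ltr0n.
have E : (m.+2%:R : R) = m.+1%:R * (1 + (m.+1%:R)^-1).
  by rewrite mulrDr mulr1 mulfV ?lt0r_neq0 // -natr1.
rewrite E lnM ?posrE //.
rewrite addrC; apply: lerD => //; apply: le_ln1Dx.
by rewrite (lt_le_trans _ (_ : 0 <= _)) ?invr_ge0 ?ltW // ltrN10.
Qed.

Definition cslow n i := cfg 1 (n - 2 - i) i 1.
Definition chalt n := cfg 0 0 n 0.
Definition csl n t := if (t <= n - 2)%N then cslow n t else chalt n.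
Definition vB : reaction Sp := (dv sB, dv sB).
Definition Hl n := [seq a <- Rs | applicable a (chalt n)].
Definition all_ n t := if (t < n - 2)%N then rxp else if t == (n - 2)%N then rxq
   else nth vB (Hl n) ((t - (n - 1)) %% size (Hl n)).

Lemma cfgE l u b z : [/\ cfg l u b z sL = l, cfg l u b z sA = u, cfg l u b z sB = b & cfg l u b z sZ = z].
Proof. by rewrite !ffunE. Qed.

Lemma vec_ext4 c c' : c sL = c' sL -> c sA = c' sA -> c sB = c' sB -> c sZ = c' sZ -> c = c'.
Proof.
move=> EL EA EB EZ; apply/ffunP => -[[|[|[|[|m]]]] Hm] //.
- by rewrite (_ : Ordinal Hm = sL) //; apply: val_inj.
- by rewrite (_ : Ordinal Hm = sA) //; apply: val_inj.
- by rewrite (_ : Ordinal Hm = sB) //; apply: val_inj.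
- by rewrite (_ : Ordinal Hm = sZ) //; apply: val_inj.
Qed.

Lemma react_L0 a c : a \in Rs -> applicable a c -> c sL = 0%N -> react a c = c.
Proof.
case/Rs_cases => [->|->|E] Hap H0.
- by move: Hap; rewrite app_rxp H0.
- by move: Hap; rewrite app_rxq H0.
- by rewrite react_void.
Qed.

Lemma app_dv X c : applicable (dv X, dv X) c = (0 < c X)%N.
Proof.
apply/forallP/idP => [H | H Y]; first by have := H X; rewrite /= dvE eqxx.
by rewrite /= dvE; case: (eqVneq Y X) => [->|].
Qed.

Section LB.
Variables (n : nat) (Hn : (3 <= n)%N).

Lemma vB_Hl : vB \in Hl n.
Proof. by rewrite mem_filter dv_in app_dv /chalt; case: (cfgE 0 0 n 0) => _ _ -> _; lia. Qed.

Lemma Hl_pos : (0 < size (Hl n))%N.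
Proof. by case: (Hl n) vB_Hl. Qed.

Lemma all_tail t : (n - 2 < t)%N -> all_ n t \in Hl n.
Proof.
move=> Ht; rewrite /all_ ifN; last by rewrite -leqNgt ltnW.
rewrite ifN; last by rewrite neq_ltn Ht orbT.
by apply: mem_nth; rewrite ltn_mod Hl_pos.
Qed.

Lemma csl_tail t : (n - 2 < t)%N -> csl n t = chalt n.
Proof. by move=> Ht; rewrite /csl ifN // -ltnNge. Qed.

Lemma exec_lb : execution Rs (csl n) (all_ n).
Proof.
move=> t; case: (ltngtP t (n - 2)) => Ht.
- have -> : all_ n t = rxp by rewrite /all_ Ht.
  rewrite /csl ltnW // Ht /cslow; split; first exact: rxp_in.
    by rewrite app_rxp; case: (cfgE 1 (n - 2 - t) t 1) => -> -> _ _; lia.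
  have Hl1 : (1 <= cfg 1 (n - 2 - t) t 1 sL)%N by case: (cfgE 1 (n - 2 - t) t 1) => ->.
  have := react_rxp Hl1; case: (cfgE 1 (n - 2 - t) t 1) => -> -> -> ->.
  case: (cfgE 1 (n - 2 - t.+1) t.+1 1) => EL EA EB EZ [R1 [R2 [R3 R4]]].
  apply: vec_ext4; rewrite ?EL ?EA ?EB ?EZ ?R1 ?R2 ?R3 ?R4; lia.
- have Hin := all_tail Ht; move: Hin; rewrite mem_filter => /andP[Hap Ha].
  rewrite !csl_tail //; last by lia.
  split => //; rewrite react_L0 // /chalt; by case: (cfgE 0 0 n 0).
- rewrite Ht; have -> : all_ n (n - 2) = rxq by rewrite /all_ ltnn eqxx.
  rewrite /csl leqnn ifN; last by rewrite -ltnNge ltnS.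
  rewrite /cslow; split; first exact: rxq_in.
    by rewrite app_rxq; case: (cfgE 1 (n - 2 - (n - 2)) (n - 2) 1) => -> _ _ ->.
  have := react_rxq (cfg 1 (n - 2 - (n - 2)) (n - 2) 1).
  case: (cfgE 1 (n - 2 - (n - 2)) (n - 2) 1) => -> -> -> ->.
  case: (cfgE 0 0 n 0) => EL EA EB EZ [R1 [R2 [R3 R4]]].
  rewrite /chalt; apply: vec_ext4; rewrite ?EL ?EA ?EB ?EZ ?R1 ?R2 ?R3 ?R4; lia.
Qed.

Lemma fair_lb : weakly_fair Rs (csl n) (all_ n).
Proof.
move=> t a Ha _.
case: (boolP (applicable a (chalt n))) => Hap; last first.
  exists (t + (n - 1))%N; split; first exact: leq_addr.
  by right; rewrite csl_tail //; lia.
have Hin : a \in Hl n by rewrite mem_filter Hap Ha.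
set k := size (Hl n); set i := index a (Hl n).
have Hi : (i < k)%N by rewrite index_mem.
exists (n - 1 + k * t + i)%N; split.
  have := Hl_pos; rewrite -/k => Hk; nia.
left; rewrite /all_ ifN; last by lia.
rewrite ifN; last by apply/eqP; lia.
rewrite (_ : (n - 1 + k * t + i - (n - 1))%N = (t * k + i)%N); last by lia.
by rewrite modnMDl modn_small // nth_index.
Qed.

End LB.


Section LB2.
Variables (phi : R) (n : nat) (Hphi : 0 < phi) (Hn : (3 <= n)%N)
  (rho : vec Sp -> set (reaction Sp)) (Hrho : runtime_policy Rs rho)
  (Hadm : forall c, is_config c -> (escaping Rs c `<=` rho c)%classic).

Lemma csl_slow i : (i <= n - 2)%N -> csl n i = cslow n i.
Proof. by move=> Hi; rewrite /csl Hi. Qed.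

Lemma csl_config t : is_config (csl n t).
Proof.
rewrite /is_config /csl; case: ifP => Ht; rewrite /cslow /chalt norm1_cfg; lia.
Qed.

Lemma app_rxq_slow i : applicable rxq (cslow n i).
Proof. by rewrite app_rxq /cslow; case: (cfgE 1 (n - 2 - i) i 1) => -> _ _ ->. Qed.

Lemma app_rxp_slow i : (i < n - 2)%N -> applicable rxp (cslow n i).
Proof. by move=> Hi; rewrite app_rxp /cslow; case: (cfgE 1 (n - 2 - i) i 1) => -> -> _ _; lia. Qed.

Lemma rho_nv b c : rho c b -> b.1 != b.2 /\ b \in Rs.
Proof. by move/Hrho; rewrite mem_filter => /andP[]. Qed.

Lemma tau_lb i : is_tau (csl n) (all_ n) i (rho (csl n i)) i.+1.
Proof.
split; [exact: ltnSn | | by move=> s' /andP[A B]; lia].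
case: (leqP i (n - 2)) => Hi.
  left => /=; apply: (Hadm (csl_config i)); rewrite csl_slow //.
  case: (ltngtP i (n - 2)) => Hi'; last 1 first.
  - have -> : all_ n i = rxq by rewrite /all_ Hi' ltnn eqxx.
    by apply: escaping_in; [exact: rxq_in | exact: app_rxq_slow | exact: rxq_nv].
  - have -> : all_ n i = rxp by rewrite /all_ Hi'.
    by apply: escaping_in; [exact: rxp_in | exact: app_rxp_slow | exact: rxp_nv].
  - lia.
right => b Hb; exists i; split; first by rewrite leqnn leqnSn.
have [Hnv Hin] := rho_nv Hb; rewrite csl_tail //.
case: (NV_cases Hin Hnv) => ->; rewrite ?app_rxp ?app_rxq /chalt;
  by case: (cfgE 0 0 n 0) => ->.
Qed.

Lemma csl0 : csl n 0 = cfg 1 (n - 2) 0 1.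
Proof. by rewrite csl_slow // /cslow subn0. Qed.

Lemma tstar_lb : is_least (fun t => halt Rs (target Iface (csl n 0)) (csl n t)) (n - 1).
Proof.
have [L1 _ _ Z1] := cfgE 1 (n - 2) 0 1.
split.
  rewrite [csl n (n - 1)]csl_tail; last by lia.
  apply: halt_L0'; rewrite ?csl0 //; last by rewrite /chalt; case: (cfgE 0 0 n 0).
  by rewrite /is_config /chalt norm1_cfg; lia.
move=> m Hm; rewrite [csl n m]csl_slow; last by lia.
exact: not_halt (app_rxq_slow m).
Qed.

Lemma RT_val_lb : RT_vals Rs Iface phi rho id (csl n) (all_ n)
   (\sum_(i < n - 1) TC Rs phi (rho (csl n i)) (csl n i))%E.
Proof.
exists id, (n - 1)%N, (n - 1)%N; split => //.
- exact: tau_lb.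
- exact: tstar_lb.
- by split => // m Hm; lia.
Qed.

Lemma Pn_slow i : (i < n - 1)%N -> Pn Rs phi (cslow n i) = (n - 1 - i)%:R / phi.
Proof.
move=> Hi; rewrite /Pn -big_filter -/(NV Rs) (perm_big _ NV_perm) !big_cons big_nil /= addr0.
rewrite prop_rxp prop_rxq -mulrDl -natrD /cslow; case: (cfgE 1 (n - 2 - i) i 1) => -> -> _ ->.
congr (_%:R / _); lia.
Qed.

Lemma TC_lb i : (i < n - 1)%N ->
  ((phi / (2 * (n - 1 - i)%:R))%:E <= TC Rs phi (rho (csl n i)) (csl n i))%E.
Proof.
move=> Hi; have Hk : (0 : R) < (n - 1 - i)%:R by rewrite ltr0n; lia.
rewrite csl_slow; last by lia.
have H := @TC_ge_half _ _ Rs phi Hphi (rho (cslow n i)) rxq (cslow n i)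
  (fun b Hb => (rho_nv Hb).1).
rewrite Pn_slow // in H.
have E : (2 * ((n - 1 - i)%:R / phi))^-1 = phi / (2 * (n - 1 - i)%:R).
  by field; rewrite !lt0r_neq0.
rewrite -E; apply: H; last by rewrite divr_gt0.
  have := Hadm (csl_config i); rewrite csl_slow; last by lia.
  apply; apply: escaping_in; [exact: rxq_in | exact: app_rxq_slow | exact: rxq_nv].
exact: app_rxq_slow.
Qed.

Lemma RT_max_lb : (((phi / 2) * ln (n%:R))%:E <= RT_max Rs Iface phi rho n)%E.
Proof.
apply: le_ereal_sup_tmp; exists (\sum_(i < n - 1) TC Rs phi (rho (csl n i)) (csl n i))%E.
  exists (csl n), (all_ n), id; split.
  - by split; [exact: exec_lb | exact: fair_lb].
  - split; first exact: csl_config.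
    exists (csl n 0); split; first exact: csl_config.
    by rewrite /= csl0; case: (cfgE 1 (n - 2) 0 1) => -> _ _ ->.
  - by rewrite csl0 norm1_cfg; lia.
  - by move=> t.
  - exact: RT_val_lb.
apply: le_trans; last first.
  apply: lee_sum => i _; exact: TC_lb (ltn_ord i).
rewrite sumEFin lee_fin.
have -> : \sum_(i < n - 1) phi / (2 * (n - 1 - i)%:R) = phi / 2 * \sum_(i < n - 1) ((n - 1 - i)%:R)^-1.
  by rewrite mulr_sumr; apply: eq_bigr => i _; rewrite invfM mulrA.
rewrite ler_pM2l ?divr_gt0 //.
have := harm (n - 1); rewrite (_ : (n - 1).+1 = n) //; lia.
Qed.

End LB2.

End Real.


Lemma rho_good_policy : runtime_policy Rs rho_good.
Proof. by move=> c a ->; rewrite mem_filter rxq_nv rxq_in. Qed.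

Unset Implicit Arguments.

Theorem proposition7p4 (R : realType) :
  exists (S : finType) (Rs : seq (reaction S)) (I : interface S),
    [/\ wf_crn Rs, haltingly_correct Rs I &
      forall phi : nat -> R, volume_Theta_n phi ->
        is_O_n (RT_halt Rs I phi) /\ is_Omega_nlogn (RT_halt_escaping Rs I phi)].
Proof.
exists Sp, Rs, Iface; split; [exact: wf_Rs | exact: halting_correct |].
move=> phi [a [b [Ha Hb Hphi]]]; split.
- exists (b + 1)%R, 1%N => n Hn.
  have [Hp1 Hp2] := Hphi n Hn.
  have Hn' : (1 <= n%:R :> R)%R by rewrite ler1n.
  have phi_pos : (0 < phi n)%R.
    by apply: Order.POrderTheory.lt_le_trans Hp1; rewrite mulr_gt0 // ltr0n.
  rewrite /RT_halt /RT_halt_adm.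
  apply: Order.POrderTheory.le_trans.
    apply: ereal_inf_lbound; exists rho_good => //; split => //.
    exact: rho_good_policy.
  apply: ge_ereal_sup => v [cs [al [sigma [[He _] Hv Hnorm Hsig Hrt]]]].
  apply: Order.POrderTheory.le_trans (RT_good_bound phi_pos He Hv Hrt) _.
  rewrite lee_fin; lra.
- exists (a / 2)%R, 3%N; split; first by rewrite divr_gt0.
  move=> n Hn.
  have Hn0 : (0 < n)%N by lia.
  have [Hp1 Hp2] := Hphi n Hn0.
  have phi_pos : (0 < phi n)%R.
    by apply: Order.POrderTheory.lt_le_trans Hp1; rewrite mulr_gt0 // ltr0n.
  rewrite /RT_halt_escaping /RT_halt_adm.
  apply: le_ereal_inf_tmp => _ [rho [Hpol Hadm] <-].
  apply: Order.POrderTheory.le_trans (RT_max_lb phi_pos Hn Hpol Hadm).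
  rewrite lee_fin.
  have Hl : (0 <= ln (n%:R : R))%R by rewrite ln_ge0 // ler1n; lia.
  have E : (a / 2 * n%:R * ln n%:R = (a * n%:R) / 2 * ln n%:R :> R)%R by ring.
  rewrite E; apply: ler_wpM2r => //; apply: ler_wpM2r => //; by rewrite invr_ge0 ler0n.
Qed.
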